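(* Let $N\ge1$, let $\mathsf L=\mathrm{diag}(L_1,\dots,L_N)$ with nonzero complex $L_n$, let $|1\rangle$ be the $N$-column with all entries $1$, and let $\mathsf A$ be an $N\times N$ matrix satisfying $\mathsf L\mathsf A-\mathsf A\mathsf L^{-1}=|1\rangle\langle a|$ for some $N$-row $\langle a|$. For a complex number $\xi$ with $\xi\notin\{L_n,L_n^{-1}\}$ for all $n$, set $\mathsf H_\xi=(\xi-\mathsf L)(\xi-\mathsf L^{-1})^{-1}$ (so $\mathsf H_0=\mathsf L^2$). For functions $f(\mathsf A,F)$ of such a matrix $\mathsf A$ and a nonzero scalar $F$, define the shift $\mathbb T_\xi f(\mathsf A,F)=f(\mathsf A\mathsf H_\xi,-\xi F)$ (note $\mathsf A\mathsf H_\xi$ again satisfies the same type of relation, with row $\langle a|\mathsf H_\xi$). Define $$\tau(\mathsf A,F)=\det(\mathsf 1+\mathsf A),\quad \sigma(\mathsf A,F)=-F^{-1}\det(\mathsf 1+\mathsf A\mathsf H_0^{-1}),\quad \rho(\mathsf A,F)=F\det(\mathsf 1+\mathsf A\mathsf H_0),$$ i.e. $\tau=\Omega$, $\sigma=-F^{-1}\mathbb T_0^{-1}\Omega$, $\rho=F\,\mathbb T_0\Omega$ with $\Omega=\det(\mathsf 1+\mathsf A)$. Then for all nonzero $\xi,\eta\notin\{L_n,L_n^{-1}:n=1,\dots,N\}$, $$(\xi-\eta)\,\tau\,\mathbb T_\xi\mathbb T_\eta\sigma=\mathbb T_\xi\sigma\,\mathbb T_\eta\tau-\mathbb T_\xi\tau\,\mathbb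 T_\eta\sigma,$$ $$(\xi-\eta)\,\rho\,\mathbb T_\xi\mathbb T_\eta\tau=\mathbb T_\xi\tau\,\mathbb T_\eta\rho-\mathbb T_\xi\rho\,\mathbb T_\eta\tau,$$ $$\left(1-\frac{1}{\xi\eta}\right)\mathbb T_\xi\tau\,\mathbb T_\eta\tau=\tau\,\mathbb T_\xi\mathbb T_\eta\tau+\rho\,\mathbb T_\xi\mathbb T_\eta\sigma,$$ all functions being evaluated at the same $(\mathsf A,F)$.
   Context: Here $\mathsf 1$ is the $N\times N$ identity matrix; all matrices $\mathsf H_\xi$ are diagonal and commute. In particular $\mathbb T_\xi F=-\xi F$ for the scalar $F$. *)

(* Defs.v *)
(* Complex numbers are modelled as R[i] = complex R for a
   real closed field R (R = the reals gives C); the statement is proved for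
   every such R. *)
From HB Require Import structures.
From mathcomp Require Import all_boot all_order all_algebra.
From mathcomp Require Import complex.
Set Implicit Arguments. Unset Strict Implicit. Unset Printing Implicit Defensive.
Import Order.TTheory GRing.Theory Num.Theory.
Local Open Scope ring_scope.

Section Defs.
Variables (R : rcfType) (N : nat).
Local Notation C := (R[i])%C.

Definition Lmat (Ls : 'I_N -> C) : 'M[C]_N := diag_mx (\row_n Ls n).

Definition ones : 'cV[C]_N := const_mx 1.

Definition Hmat (Ls : 'I_N -> C) (xi : C) : 'M[C]_N :=
  (xi%:M - Lmat Ls) *m invmx (xi%:M - Lmat (fun n => (Ls n)^-1)).

Definition Tsh (Ls : 'I_N -> C) (xi : C) (f : 'M[C]_N -> C -> C) :
  'M[C]_N -> C -> C :=
  fun A F => f (A *m Hmat Ls xi) (- xi * F).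

Definition tau (Ls : 'I_N -> C) : 'M[C]_N -> C -> C :=
  fun A F => \det (1%:M + A).
Definition sigma (Ls : 'I_N -> C) : 'M[C]_N -> C -> C :=
  fun A F => - F^-1 * \det (1%:M + A *m invmx (Hmat Ls 0)).
Definition rho (Ls : 'I_N -> C) : 'M[C]_N -> C -> C :=
  fun A F => F * \det (1%:M + A *m Hmat Ls 0).
End Defs.

(* Main.v *)
Require Import Defs.
From HB Require Import structures.
From mathcomp Require Import all_boot all_order all_algebra.
From mathcomp Require Import complex.
From mathcomp Require Import ring.
Import Order.TTheory GRing.Theory Num.Theory.
Local Open Scope ring_scope.

Set Implicit Arguments. Unset Strict Implicit. Unset Printing Implicit Defensive.


Section Gen.
Variable K : fieldType.

Lemma det_sim n (X Y : 'M[K]_n) (p : 'I_n -> K) :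
  (forall i, p i != 0) -> (forall i j, p i * X i j = Y i j * p j) ->
  \det X = \det Y.
Proof.
move=> hp hXY.
have E : diag_mx (\row_i p i) *m X = Y *m diag_mx (\row_i p i).
  by apply/matrixP => i j; rewrite mul_diag_mx mul_mx_diag !mxE hXY.
have := congr1 determinant E; rewrite !det_mulmx det_diag mulrC.
apply: mulIf; apply/prodf_neq0 => i _; rewrite mxE; exact: hp.
Qed.

Lemma sylvester n k (U : 'M[K]_(n, k)) (W : 'M[K]_(k, n)) :
  \det (1%:M + U *m W) = \det (1%:M + W *m U).
Proof.
have E1 : block_mx 1%:M (- U) W 1%:M
   = block_mx 1%:M 0 W 1%:M *m block_mx 1%:M (- U) 0 (1%:M + W *m U).
  rewrite mulmx_block !mul1mx !mul0mx !addr0 ?add0r mulmx1 mulmxN.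
  by rewrite addrC addrK.
have E2 : block_mx 1%:M (- U) W 1%:M
   = block_mx (1%:M + U *m W) (- U) 0 1%:M *m block_mx 1%:M 0 W 1%:M.
  by rewrite mulmx_block !mul1mx !mul0mx !mulmx1 !mulmx0 !add0r mulNmx addrK.
have := congr1 determinant E1; rewrite E2 !det_mulmx !det_lblock !det_ublock.
by rewrite !det1 !mul1r !mulr1.
Qed.

Lemma mdl n k (M : 'M[K]_n) (U : 'M[K]_(n, k)) (W : 'M[K]_(k, n)) :
  M \in unitmx ->
  \det (M + U *m W) = \det M * \det (1%:M + W *m (invmx M *m U)).
Proof.
move=> hM.
have -> : M + U *m W = M *m (1%:M + (invmx M *m U) *m W).
  by rewrite mulmxDr mulmx1 !mulmxA mulmxV // mul1mx.
by rewrite det_mulmx sylvester.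
Qed.

Lemma det2 (Z : 'M[K]_2) : \det Z = Z 0 0 * Z 1 1 - Z 0 1 * Z 1 0.
Proof.
rewrite (expand_det_row _ 0) !big_ord_recl big_ord0 addr0 /cofactor !det_mx11 !mxE.
have e1 : lift (0:'I_2) (ord0 : 'I_1) = 1 by apply/val_inj.
have e2 : lift (lift (ord0 : 'I_2) (ord0 : 'I_1)) (ord0 : 'I_1) = 0 by apply/val_inj.
have e3 : lift (ord0 : 'I_2) (ord0 : 'I_1) = 1 by apply/val_inj.
rewrite e2 e3 ?e1 /= expr0 expr1 !mul1r mulN1r; ring.
Qed.
End Gen.


Section Core.
Variable K : fieldType.
Variable N : nat.
Variable l : 'I_N -> K.
Variable A : 'M[K]_N.
Variable a : 'I_N -> K.
Variables x y : K.

Definition Dg (B : 'M[K]_N) (d : 'I_N -> K) := \det (1%:M + \matrix_(i,j) (B i j * d j)).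

Let Umat : 'M[K]_(N,2) := \matrix_(i, j) (if j == 0 then 1 else l i).
Let p n := a n * l n.
Let q n := a n / (x - (l n)^-1).
Let s n := a n / (y - (l n)^-1).
Let Wm a0 b0 c0 a1 b1 c1 : 'M[K]_(2,N) := \matrix_(j, n)
   (if j == 0 then a0 * p n + b0 * q n + c0 * s n else a1 * p n + b1 * q n + c1 * s n).

Lemma Dg_W d P a0 b0 c0 a1 b1 c1 :
  (forall m, P m != 0) ->
  (forall m n, P m * (A m n * d n) =
     (A m n + ((a0 * p n + b0 * q n + c0 * s n) + l m * (a1 * p n + b1 * q n + c1 * s n))) * P n) ->
  Dg A d = \det (1%:M + A + Umat *m Wm a0 b0 c0 a1 b1 c1).
Proof.
move=> hP H; apply: (det_sim hP) => i j.
rewrite !mxE !big_ord_recl big_ord0 addr0 !mxE /=.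
have E : P i * (i == j)%:R = (i == j)%:R * P j.
  by case: eqP => [->|]; rewrite ?mulr0 ?mul0r ?mulr1 ?mul1r.
rewrite mulrDr mulrDl E H mul1r; ring.
Qed.

Let M := 1%:M + A.
Let Y := invmx M *m Umat.
Let Xf (r : 'I_N -> K) (k : 'I_2) := \sum_n r n * Y n k.

Lemma WY a0 b0 c0 a1 b1 c1 j k :
  (Wm a0 b0 c0 a1 b1 c1 *m Y) j k =
  if j == 0 then a0 * Xf p k + b0 * Xf q k + c0 * Xf s k
  else a1 * Xf p k + b1 * Xf q k + c1 * Xf s k.
Proof.
rewrite mxE /Xf; under eq_bigr do rewrite mxE; case: (j == 0);
  by rewrite !mulr_sumr -!big_split; apply: eq_bigr => i _ /=; ring.
Qed.

Lemma detUW a0 b0 c0 a1 b1 c1 : \det M != 0 ->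
  \det (1%:M + A + Umat *m Wm a0 b0 c0 a1 b1 c1) = \det M *
   ((1 + (a0 * Xf p 0 + b0 * Xf q 0 + c0 * Xf s 0)) *
    (1 + (a1 * Xf p 1 + b1 * Xf q 1 + c1 * Xf s 1)) -
    (a0 * Xf p 1 + b0 * Xf q 1 + c0 * Xf s 1) *
    (a1 * Xf p 0 + b1 * Xf q 0 + c1 * Xf s 0)).
Proof.
move=> hM; rewrite mdl; last by rewrite unitmxE unitfE.
rewrite -[invmx _ *m Umat]/Y.
have E j k : (1%:M + Wm a0 b0 c0 a1 b1 c1 *m Y) j k = (j == k)%:R + (Wm a0 b0 c0 a1 b1 c1 *m Y) j k.
  by rewrite [LHS]mxE [X in X + _ = _]mxE.
by rewrite det2 !E !WY /= !add0r.
Qed.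

Definition hh (z : K) n := (z - l n) / (z - (l n)^-1).

Lemma core_inv (hl : forall n, l n != 0)
  (hA : forall m n, A m n * (l m - (l n)^-1) = a n)
  (hx0 : x != 0) (hy0 : y != 0)
  (hxl : forall n, x != l n) (hxli : forall n, x != (l n)^-1)
  (hyl : forall n, y != l n) (hyli : forall n, y != (l n)^-1)
  (hxy : x != y) (hM : \det (1%:M + A) != 0) :
  (x - y) * Dg A (fun n => l n ^+ 2) * Dg A (fun n => hh x n * hh y n)
  = x * Dg A (fun n => hh x n * l n ^+ 2) * Dg A (hh y)
    - y * Dg A (hh x) * Dg A (fun n => hh y n * l n ^+ 2).
Proof.
have hxl' n : x - l n != 0 by rewrite subr_eq0.
have hyl' n : y - l n != 0 by rewrite subr_eq0.
have hxli' n : x - (l n)^-1 != 0 by rewrite subr_eq0.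
have hyli' n : y - (l n)^-1 != 0 by rewrite subr_eq0.
have hxy' : x - y != 0 by rewrite subr_eq0.
have hxl2 n : x * l n - 1 != 0.
  by rewrite (_ : x * l n - 1 = (x - (l n)^-1) * l n) ?mulf_neq0 // mulrBl mulVf.
have hyl2 n : y * l n - 1 != 0.
  by rewrite (_ : y * l n - 1 = (y - (l n)^-1) * l n) ?mulf_neq0 // mulrBl mulVf.
have e1 : Dg A (fun n => l n ^+ 2) = \det (1%:M + A + Umat *m Wm 1 0 0 0 0 0).
  apply: (@Dg_W _ l) => [m|m n]; first by exact: hl.
  rewrite /p /q /s /hh -(hA m n) /=; field; by rewrite ?hl ?hxl2 ?hyl2 ?hx0 ?hy0 ?hxy' ?hxl' ?hyl' ?hxli' ?hyli'.
have e2 : Dg A (fun n => hh x n * hh y n) = \det (1%:M + A + Umat *m Wm 0 (y / (x - y)) (- x / (x - y)) 0 (-1 / (x - y)) (1 / (x - y))).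
  apply: (@Dg_W _ (fun m => (x - l m) * (y - l m))) => [m|m n]; first by rewrite mulf_neq0 ?hxl' ?hyl' ?hl.
  rewrite /p /q /s /hh -(hA m n) /=; field; by rewrite ?hl ?hxl2 ?hyl2 ?hx0 ?hy0 ?hxy' ?hxl' ?hyl' ?hxli' ?hyli'.
have e3 : Dg A (fun n => hh x n * l n ^+ 2) = \det (1%:M + A + Umat *m Wm 1 0 0 (-1 / x) (-1 / x) 0).
  apply: (@Dg_W _ (fun m => (x - l m) * l m)) => [m|m n]; first by rewrite mulf_neq0 ?hxl' ?hyl' ?hl.
  rewrite /p /q /s /hh -(hA m n) /=; field; by rewrite ?hl ?hxl2 ?hyl2 ?hx0 ?hy0 ?hxy' ?hxl' ?hyl' ?hxli' ?hyli'.
have e4 : Dg A (hh y) = \det (1%:M + A + Umat *m Wm 0 0 (-1) 0 0 0).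
  apply: (@Dg_W _ (fun m => y - l m)) => [m|m n]; first by exact: hyl'.
  rewrite /p /q /s /hh -(hA m n) /=; field; by rewrite ?hl ?hxl2 ?hyl2 ?hx0 ?hy0 ?hxy' ?hxl' ?hyl' ?hxli' ?hyli'.
have e5 : Dg A (hh x) = \det (1%:M + A + Umat *m Wm 0 (-1) 0 0 0 0).
  apply: (@Dg_W _ (fun m => x - l m)) => [m|m n]; first by exact: hxl'.
  rewrite /p /q /s /hh -(hA m n) /=; field; by rewrite ?hl ?hxl2 ?hyl2 ?hx0 ?hy0 ?hxy' ?hxl' ?hyl' ?hxli' ?hyli'.
have e6 : Dg A (fun n => hh y n * l n ^+ 2) = \det (1%:M + A + Umat *m Wm 1 0 0 (-1 / y) 0 (-1 / y)).
  apply: (@Dg_W _ (fun m => (y - l m) * l m)) => [m|m n]; first by rewrite mulf_neq0 ?hxl' ?hyl' ?hl.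
  rewrite /p /q /s /hh -(hA m n) /=; field; by rewrite ?hl ?hxl2 ?hyl2 ?hx0 ?hy0 ?hxy' ?hxl' ?hyl' ?hxli' ?hyli'.
rewrite e1 e2 e3 e4 e5 e6 !detUW //.
by field; rewrite hx0 hy0 hxy'.
Qed.

End Core.


Section Lift.
Variable K : numFieldType.

Lemma poly_vanish (p : {poly K}) : (forall t, p.[t] = 0) -> p = 0.
Proof.
move=> H; apply/eqP; apply/negPn/negP => hp.
have H1 : all (root p) [seq i%:R | i <- iota 0 (size p)].
  by apply/allP => z /mapP [i _ ->]; rewrite /root H.
have H2 : uniq [seq (i%:R : K) | i <- iota 0 (size p)].
  by rewrite map_inj_uniq ?iota_uniq // => i j /eqP; rewrite eqr_nat => /eqP.
by have := max_poly_roots hp H1 H2; rewrite size_map size_iota ltnn.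
Qed.

Lemma horner_det n (B : 'M[K]_n) t :
  (\det (1%:M + 'X *: map_mx polyC B)).[t] = \det (1%:M + t *: B).
Proof.
rewrite -[_.[t]]/(horner_eval t _) -det_map_mx; congr (\det _).
apply/matrixP => i j; rewrite !mxE -[LHS]/(((i == j)%:R + 'X * (B i j)%:P).[t]).
by rewrite hornerD hornerM hornerX hornerC hornerMn hornerC.
Qed.

Lemma core N (l : 'I_N -> K) (A : 'M[K]_N) (a : 'I_N -> K) (x y : K)
  (hl : forall n, l n != 0)
  (hA : forall m n, A m n * (l m - (l n)^-1) = a n)
  (hx0 : x != 0) (hy0 : y != 0)
  (hxl : forall n, x != l n) (hxli : forall n, x != (l n)^-1)
  (hyl : forall n, y != l n) (hyli : forall n, y != (l n)^-1) :
  (x - y) * Dg A (fun n => l n ^+ 2) * Dg A (fun n => hh l x n * hh l y n)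
  = x * Dg A (fun n => hh l x n * l n ^+ 2) * Dg A (hh l y)
    - y * Dg A (hh l x) * Dg A (fun n => hh l y n * l n ^+ 2).
Proof.
case: (eqVneq x y) => [<-|hxy]; first by rewrite subrr !mul0r; ring.
pose P d := \det (1%:M + 'X *: map_mx polyC (\matrix_(i,j) (A i j * d j))).
have PE d t : (P d).[t] = Dg (t *: A) d.
  rewrite /P horner_det /Dg; congr (\det (_ + _)).
  by apply/matrixP=> i j; rewrite !mxE mulrA.
pose E := (x - y)%:P * P (fun n => l n ^+ 2) * P (fun n => hh l x n * hh l y n)
  - (x%:P * P (fun n => hh l x n * l n ^+ 2) * P (hh l y)
    - y%:P * P (hh l x) * P (fun n => hh l y n * l n ^+ 2)).
pose Q := \det (1%:M + 'X *: map_mx polyC A).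
have EQ : E * Q = 0.
  apply: poly_vanish => t; rewrite hornerM.
  case: (eqVneq Q.[t] 0) => [->|hQ]; first by rewrite mulr0.
  rewrite /E !(hornerD, hornerN, hornerM, hornerC) !PE.
  rewrite (@core_inv _ _ l (t *: A) (fun n => t * a n)) //.
    by rewrite subrr mul0r.
    by move=> m n; rewrite mxE -mulrA hA.
  by rewrite -horner_det.
have Q0 : Q != 0.
  apply/negP => /eqP h.
  have H0 : Q.[0] = \det (1%:M + 0 *: A) := horner_det A 0.
  move: H0; rewrite h horner0 scale0r addr0 det1 => /eqP; by rewrite eq_sym oner_eq0.
have E0 : E = 0 by apply/eqP; move: EQ => /eqP; rewrite mulf_eq0 (negPf Q0) orbF.
have := congr1 (fun e => e.[1]) E0.
rewrite /E !(hornerD, hornerN, hornerM, hornerC) !PE scale1r => /eqP.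
by rewrite subr_eq0 => /eqP.
Qed.

End Lift.

Unset Implicit Arguments. Set Strict Implicit. Set Printing Implicit Defensive.


Section Aux.
Variable K : fieldType.
Variable N : nat.

Lemma scal_sub_diag (z : K) (d : 'I_N -> K) :
  z%:M - diag_mx (\row_n d n) = diag_mx (\row_n (z - d n)).
Proof.
apply/matrixP => i j; rewrite !mxE.
by case: eqP => _; rewrite ?mulr1n ?mulr0n ?subrr.
Qed.

Lemma inv_diag (d : 'I_N -> K) : (forall n, d n != 0) ->
  invmx (diag_mx (\row_n d n)) = diag_mx (\row_n (d n)^-1).
Proof.
move=> hd.
have h : diag_mx (\row_n d n) *m diag_mx (\row_n (d n)^-1) = 1%:M.
  apply/matrixP => i j; rewrite mul_diag_mx !mxE.
  by case: eqP => [->|_]; rewrite ?mulr1n ?mulr0n ?mulr0 ?mulfV.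
have [uD _] := mulmx1_unit h.
by rewrite -[invmx _]mulmx1 -h mulmxA mulVmx // mul1mx.
Qed.

Lemma diag_mul (A : 'M[K]_N) (u v : 'I_N -> K) :
  A *m diag_mx (\row_n u n) *m diag_mx (\row_n v n) = A *m diag_mx (\row_n (u n * v n)).
Proof.
rewrite -mulmxA; congr (_ *m _); apply/matrixP => i j; rewrite mul_diag_mx !mxE.
by case: eqP => [->|_]; rewrite ?mulr1n ?mulr0n ?mulr0.
Qed.

Lemma DgE (A : 'M[K]_N) (d : 'I_N -> K) :
  \det (1%:M + A *m diag_mx (\row_n d n)) = Dg A d.
Proof.
by rewrite /Dg mul_mx_diag; congr (\det (_ + _)); apply/matrixP => i j; rewrite !mxE.
Qed.

Lemma Dg_ext (A : 'M[K]_N) (d1 d2 : 'I_N -> K) : (forall n, d1 n = d2 n) ->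
  Dg A d1 = Dg A d2.
Proof.
by move=> h; rewrite /Dg; congr (\det (_ + _)); apply/matrixP => i j; rewrite !mxE h.
Qed.

Lemma Dg_sc (A : 'M[K]_N) (e d : 'I_N -> K) :
  Dg (\matrix_(i, j) (A i j * e j)) d = Dg A (fun n => e n * d n).
Proof.
by rewrite /Dg; congr (\det (_ + _)); apply/matrixP => i j; rewrite !mxE mulrA.
Qed.
End Aux.

Fact hk_key : unit. Proof. exact: tt. Qed.
Definition hk {K : fieldType} {N : nat} := locked_with hk_key (@hh K N).
Lemma hkE (K : fieldType) (N : nat) : @hk K N = @hh K N. Proof. exact: unlock. Qed.

Lemma HmatE (R : rcfType) N (Ls : 'I_N -> R[i]%C) (z : R[i]%C) :
  (forall n, z != (Ls n)^-1) ->
  Hmat Ls z = diag_mx (\row_n hk Ls z n).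
Proof.
rewrite hkE.
move=> hz; rewrite /Hmat /Lmat !scal_sub_diag inv_diag; last first.
  by move=> n; rewrite subr_eq0.
by rewrite -[_ *m _]mul1mx mulmxA diag_mul mul1mx.
Qed.


Lemma core' (K : numFieldType) N (l : 'I_N -> K) (A : 'M[K]_N) (a : 'I_N -> K) (x y : K)
  (hl : forall n, l n != 0)
  (hA : forall m n, A m n * (l m - (l n)^-1) = a n)
  (hx0 : x != 0) (hy0 : y != 0)
  (hxl : forall n, x != l n) (hxli : forall n, x != (l n)^-1)
  (hyl : forall n, y != l n) (hyli : forall n, y != (l n)^-1)
  (D1 D2 D3 D4 D5 D6 : K) :
  Dg A (fun n => l n ^+ 2) = D1 ->
  Dg A (fun n => hh l x n * hh l y n) = D2 ->
  Dg A (fun n => hh l x n * l n ^+ 2) = D3 ->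
  Dg A (hh l y) = D4 -> Dg A (hh l x) = D5 ->
  Dg A (fun n => hh l y n * l n ^+ 2) = D6 ->
  (x - y) * D1 * D2 = x * D3 * D4 - y * D5 * D6.
Proof.
move=> <- <- <- <- <- <-; exact: core.
Qed.

Lemma final (R : rcfType) N (Ls : 'I_N -> R[i]%C) (A : 'M[R[i]%C]_N) (a : 'I_N -> R[i]%C)
  (F xi eta : R[i]%C)
  (hl : forall n, Ls n != 0) (hA : forall m n, A m n * (Ls m - (Ls n)^-1) = a n)
  (HF : F != 0) (hx0 : xi != 0) (hy0 : eta != 0)
  (hxl : forall n, xi != Ls n) (hxli : forall n, xi != (Ls n)^-1)
  (hyl : forall n, eta != Ls n) (hyli : forall n, eta != (Ls n)^-1)
  (D0 D1 D2 D3 Dx Dy Dz Dxy Dyz Dxz : R[i]%C)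
  (e0 : D0 = Dg A (fun _ => 1))
  (e1 : D1 = Dg A (fun n => hk Ls xi n * (hk Ls eta n / hk Ls 0 n)))
  (e2 : D2 = Dg A (fun n => hk Ls xi n / hk Ls 0 n))
  (e3 : D3 = Dg A (fun n => hk Ls eta n / hk Ls 0 n))
  (ex : Dx = Dg A (hk Ls xi)) (ey : Dy = Dg A (hk Ls eta)) (ez : Dz = Dg A (hk Ls 0))
  (exy : Dxy = Dg A (fun n => hk Ls xi n * hk Ls eta n))
  (eyz : Dyz = Dg A (fun n => hk Ls eta n * hk Ls 0 n))
  (exz : Dxz = Dg A (fun n => hk Ls xi n * hk Ls 0 n)) :
  [/\ (xi - eta) * D0 * (- (- eta * (- xi * F))^-1 * D1) = - (- xi * F)^-1 * D2 * Dy - Dx * (- (- eta * F)^-1 * D3), (xi - eta) * (F * Dz) * Dxy = Dx * (- eta * F * Dyz) - - xi * F * Dxz * Dy & (1 - (xi * eta)^-1) * Dx * Dy = D0 * Dxy + F * Dz * (- (- eta * (- xi * F))^-1 * D1)].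
Proof.
have hxl2 n : xi * Ls n - 1 != 0.
  by rewrite (_ : xi * Ls n - 1 = (xi - (Ls n)^-1) * Ls n) ?mulf_neq0 ?subr_eq0 // mulrBl mulVf.
have hyl2 n : eta * Ls n - 1 != 0.
  by rewrite (_ : eta * Ls n - 1 = (eta - (Ls n)^-1) * Ls n) ?mulf_neq0 ?subr_eq0 // mulrBl mulVf.
have hxl3 n : xi - Ls n != 0 by rewrite subr_eq0.
have hyl3 n : eta - Ls n != 0 by rewrite subr_eq0.
have C2 : (xi - eta) * Dz * Dxy = xi * Dxz * Dy - eta * Dx * Dyz.
  apply: (@core' (R[i])%C N Ls A a xi eta hl hA hx0 hy0 hxl hxli hyl hyli Dz Dxy Dxz Dy Dx Dyz);
  rewrite ?e0 ?e1 ?e2 ?e3 ?ex ?ey ?ez ?exy ?eyz ?exz; apply: Dg_ext => n;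
  rewrite ?hkE /hh; field; by rewrite ?hl ?hxl2 ?hyl2 ?hxl3 ?hyl3.
pose B := \matrix_(i, j) (A i j * (Ls j ^+ 2)^-1).
have hB m n : B m n * (Ls m - (Ls n)^-1) = a n * (Ls n ^+ 2)^-1.
  by rewrite mxE mulrAC hA.
have C1 : (xi - eta) * D0 * D1 = xi * Dx * D3 - eta * D2 * Dy.
  apply: (@core' (R[i])%C N Ls B _ xi eta hl hB hx0 hy0 hxl hxli hyl hyli D0 D1 Dx D3 D2 Dy);
  rewrite Dg_sc ?e0 ?e1 ?e2 ?e3 ?ex ?ey ?ez ?exy ?eyz ?exz; apply: Dg_ext => n;
  rewrite ?hkE /hh; field; by rewrite ?hl ?hxl2 ?hyl2 ?hxl3 ?hyl3.
have hxl4 n : Ls n + -1 * xi != 0 by rewrite mulN1r subr_eq0 eq_sym.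
have hxl5 n : 1 + - Ls n * xi != 0.
  by rewrite (_ : 1 + - Ls n * xi = - (xi * Ls n - 1)) ?oppr_eq0 //; ring.
pose xi' := xi^-1.
pose A2 := \matrix_(i, j) (A i j * (hh Ls xi' j)^-1).
have hA2 m n : A2 m n * (Ls m - (Ls n)^-1) = a n * (hh Ls xi' n)^-1.
  by rewrite mxE mulrAC hA.
have hx'0 : xi' != 0 by rewrite invr_eq0.
have hx'l n : xi' != Ls n.
  by apply: contra_neq (hxli n) => <-; rewrite invrK.
have hx'li n : xi' != (Ls n)^-1.
  by apply: contra_neq (hxl n) => /invr_inj.
have C3 : (xi' - eta) * Dx * Dy = xi' * Dz * D1 - eta * D0 * Dxy.
  apply: (@core' (R[i])%C N Ls A2 _ xi' eta hl hA2 hx'0 hy0 hx'l hx'li hyl hyli Dx Dy Dz D1 D0 Dxy);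
  rewrite Dg_sc ?e0 ?e1 ?e2 ?e3 ?ex ?ey ?ez ?exy ?eyz ?exz; apply: Dg_ext => n;
  rewrite ?hkE /hh /xi'; field;
  by rewrite ?hl ?hxl2 ?hyl2 ?hxl3 ?hyl3 ?hx0 ?hxl4 ?hxl5.
have HF' : F != 0 := HF.
split.
- have -> : (xi - eta) * D0 * (- (- eta * (- xi * F))^-1 * D1)
          = - (xi * eta * F)^-1 * ((xi - eta) * D0 * D1) by field; rewrite ?hx0 ?hy0 ?HF.
  by rewrite C1; field; rewrite ?hx0 ?hy0 ?HF.
- have -> : (xi - eta) * (F * Dz) * Dxy = F * ((xi - eta) * Dz * Dxy) by ring.
  by rewrite C2; ring.
- have -> : (1 - (xi * eta)^-1) * Dx * Dy = - eta^-1 * ((xi' - eta) * Dx * Dy).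
    by rewrite /xi'; field; rewrite ?hx0 ?hy0.
  by rewrite C3 /xi'; field; rewrite ?hx0 ?hy0 ?HF.
Qed.

Lemma det1E (K : fieldType) N (A : 'M[K]_N) : \det (1%:M + A) = Dg A (fun _ => 1).
Proof.
by rewrite /Dg; congr (\det (_ + _)); apply/matrixP => i j; rewrite !mxE mulr1.
Qed.

Lemma HA_entry (R : rcfType) N (Ls : 'I_N -> R[i]%C) (HL : forall n, Ls n != 0)
  (A : 'M[R[i]%C]_N) (a : 'rV[R[i]%C]_N)
  (HA : Lmat Ls *m A - A *m invmx (Lmat Ls) = @ones R N *m a) :
  forall m n, A m n * (Ls m - (Ls n)^-1) = a 0 n.
Proof.
move=> m n; have := congr1 (fun M : 'M[R[i]%C]_N => M m n) HA.
rewrite /Lmat inv_diag // mul_diag_mx mul_mx_diag /ones !mxE big_ord1 !mxE mul1r => <-.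
ring.
Qed.

Theorem proposition4p1p1 (R : rcfType) (N : nat) (HN : (0 < N)%N)
  (Ls : 'I_N -> R[i]%C) (HL : forall n, Ls n != 0)
  (A : 'M[R[i]%C]_N) (a : 'rV[R[i]%C]_N)
  (HA : Lmat Ls *m A - A *m invmx (Lmat Ls) = @ones R N *m a)
  (F : R[i]%C) (HF : F != 0)
  (xi eta : R[i]%C) (Hxi0 : xi != 0) (Heta0 : eta != 0)
  (Hxi : forall n, xi != Ls n /\ xi != (Ls n)^-1)
  (Heta : forall n, eta != Ls n /\ eta != (Ls n)^-1) :
  let T := Tsh Ls in
  let ta := tau Ls in let si := sigma Ls in let rh := rho Ls in
  [/\ (xi - eta) * ta A F * T xi (T eta si) A F
        = T xi si A F * T eta ta A F - T xi ta A F * T eta si A F,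
      (xi - eta) * rh A F * T xi (T eta ta) A F
        = T xi ta A F * T eta rh A F - T xi rh A F * T eta ta A F
    & (1 - (xi * eta)^-1) * T xi ta A F * T eta ta A F
        = ta A F * T xi (T eta ta) A F + rh A F * T xi (T eta si) A F].
Proof.
move=> T ta si rh; rewrite /T /ta /si /rh /Tsh /tau /sigma /rho.
have h0 n : 0 != (Ls n)^-1 by rewrite eq_sym invr_eq0.
have hx n : xi != (Ls n)^-1 by case: (Hxi n).
have hy n : eta != (Ls n)^-1 by case: (Heta n).
have hxl n : xi != Ls n by case: (Hxi n).
have hyl n : eta != Ls n by case: (Heta n).
rewrite !HmatE // inv_diag; last first.
  by move=> n; rewrite hkE /hh mulf_neq0 ?invr_eq0 // sub0r oppr_eq0 ?invr_eq0.
rewrite !diag_mul.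

have FF := @final R N Ls A (fun n => a 0 n) F xi eta HL (@HA_entry R N Ls HL A a HA) HF Hxi0 Heta0 hxl hx hyl hy.
apply: FF; first exact: det1E.
all: exact: DgE.
Qed.
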